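(* Let $q$ be a prime power and $1\le s<t\le k$ integers. There exists a linear AOA$(s,t,k,q)$ if and only if there exists a linear MDS code $C$ of length $k$ and dimension $t$ over $\mathbb{F}_q$ which contains a linear MDS code $C'\subseteq C$ of length $k$ and dimension $s$ over $\mathbb{F}_q$.
   Context: An orthogonal array OA$(t,k,v)$ (with $1\le t\le k$) is a $v^t\times k$ array with entries from a set $X$ of size $v$ such that, for every choice of $t$ of its columns, each $t$-tuple in $X^t$ appears exactly once as a row of the corresponding $v^t\times t$ subarray. For integers $1\le s\le t\le k$, an augmented orthogonal array AOA$(s,t,k,v)$ is a $v^t\times(k+1)$ array $A$ such that: (1) the first $k$ columns of $A$ form an OA$(t,k,v)$ on a symbol set $X$ of size $v$; (2) the last column of $A$ has entries from a set $Y$ of size $v^{t-s}$; (3) for any choice of $s$ of the first $k$ columns, these $s$ columns together with the last column contain every $(s+1)$-tuple of $X^s\times Y$ exactly once as a row. For a prime power $q$, an OA$(t,k,q)$ over $\mathbb{F}_q$ is linear if its set of rows is a $t$-dimensional $\mathbb{F}_q$-subspace of $\mathbb{F}_q^k$; an AOA$(s,t,k,q)$ is linear if $X=\mathbb{F}_q$, $Y=\mathbb{F}_q^{t-s}$, and its set of rows, regarded as vectors in $\mathbb{F}_q^{k}\times\mathbb{F}_q^{t-s}=\mathbb{F}_q^{k+t-s}$, is an $\mathbb{F}_q$-linear subspace. A linear code of length $k$ and dimension $t$ over $\mathbb{F}_q$ is a $t$-dimensional subspace of $\mathbb{F}_q^k$; it is MDS (maximum distance separable) if its minimum Hamming distance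 is $k-t+1$ (equivalently, any $t$ columns of a $t\times k$ generator matrix are linearly independent). *)

(* Defs.v *)
From HB Require Import structures.
From mathcomp Require Import all_boot all_order all_algebra all_field.
Set Implicit Arguments. Unset Strict Implicit. Unset Printing Implicit Defensive.
Import GRing.Theory.
Local Open Scope ring_scope.

Definition hweight (F : fieldType) (n : nat) (x : 'rV[F]_n) : nat :=
  #|[set i : 'I_n | x 0 i != 0]|.

(* A linear code C (a subspace of F^k) is MDS: its minimum Hamming distance
   (= minimum weight of a nonzero codeword) equals k - dim C + 1. *)
Definition MDS (F : fieldType) (k : nat) (C : {vspace 'rV[F]_k}) : Prop :=
  (exists2 x, x \in C & x != 0 /\ hweight x = (k - \dim C + 1)%N) /\
  (forall x, x \in C -> x != 0 -> (k - \dim C + 1 <= hweight x)%N).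

(* The array whose rows are the elements of A (a subspace of
   F^k x F^(t-s) = F^(k+(t-s))) is an AOA(s,t,k,q), q = #|F|:
   (1) for every choice of t distinct columns among the first k (given by an
       injective c : 'I_t -> 'I_k), each t-tuple appears exactly once;
   (3) for every choice of s distinct columns among the first k, together with
       the last column (valued in Y = F^(t-s)), each (s+1)-tuple in
       F^s x F^(t-s) appears exactly once. *)
Definition is_linear_AOA (F : finFieldType) (s t k : nat)
    (A : {vspace 'rV[F]_(k + (t - s))}) : Prop :=
  (forall c : 'I_t -> 'I_k, injective c -> forall y : 'rV[F]_t,
     #|[set x : 'rV[F]_(k + (t - s)) | (x \in A) &&
         ((\row_j x 0 (lshift (t - s) (c j))) == y)]| = 1%N) /\
  (forall c : 'I_s -> 'I_k, injective c ->
     forall (y : 'rV[F]_s) (z : 'rV[F]_(t - s)),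
     #|[set x : 'rV[F]_(k + (t - s)) | [&& x \in A,
         (\row_j x 0 (lshift (t - s) (c j))) == y &
         rsubmx x == z]]| = 1%N).

Arguments is_linear_AOA {F} s t k A.

(* Main.v *)
Require Import Defs.
From HB Require Import structures.
From mathcomp Require Import all_boot all_order all_algebra all_field.

From mathcomp Require Import zify.
Set Implicit Arguments. Unset Strict Implicit. Unset Printing Implicit Defensive.
Import GRing.Theory.
Local Open Scope ring_scope.

Lemma fiber1 (T Y : finType) (V : {set T}) (g : T -> Y) :
  (forall y, #|[set x | (x \in V) && (g x == y)]| = 1%N) <->
  ({in V &, injective g} /\ #|V| = #|Y|).
Proof.
split.
- move=> H; have inj : {in V &, injective g}.
    move=> x1 x2 V1 V2 E.
    have /eqP/cards1P [z Hz] := H (g x1).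
    have : x1 \in [set x | (x \in V) && (g x == g x1)] by rewrite inE V1 eqxx.
    have : x2 \in [set x | (x \in V) && (g x == g x1)] by rewrite inE V2 E eqxx.
    by rewrite Hz !inE => /eqP -> /eqP ->.
  split=> //; rewrite -(card_in_imset inj) -cardsT.
  suff -> : g @: V = [set: Y] by [].
  apply/setP => y; rewrite inE.
  have /eqP/cards1P [z Hz] := H y.
  have : z \in [set x | (x \in V) && (g x == y)] by rewrite Hz set11.
  by rewrite inE => /andP [Vz /eqP <-]; apply: imset_f.
- move=> [inj cV] y.
  have : y \in g @: V.
    have -> : g @: V = setT.
      by apply/eqP; rewrite eqEcard subsetT /= cardsT (card_in_imset inj) cV.
    by rewrite inE.
  case/imsetP => x Vx ->; apply/eqP/cards1P; exists x; apply/setP => z.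
  rewrite !inE; apply/andP/eqP => [[Vz /eqP E]|->]; last by rewrite Vx eqxx.
  exact: inj.
Qed.

Lemma card_vs (F : finFieldType) n (V : {vspace 'rV[F]_n}) :
  #|[set x | x \in V]| = (#|F| ^ \dim V)%N.
Proof. by rewrite cardsE card_vspace. Qed.
Lemma card_rV (F : finFieldType) n : #|{: 'rV[F]_n}| = (#|F| ^ n)%N.
Proof. by rewrite card_mx mul1n. Qed.
Lemma F_gt1 (F : finFieldType) : (1 < #|F|)%N.
Proof. exact: finNzRing_gt1. Qed.

Lemma lin_fiber (F : finFieldType) n m (V : {vspace 'rV[F]_n})
  (g : 'rV[F]_n -> 'rV[F]_m) :
  (forall x1 x2, g (x1 - x2) = g x1 - g x2) ->
  (forall y, #|[set x | (x \in V) && (g x == y)]| = 1%N) <->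
  (\dim V = m /\ (forall x, x \in V -> g x = 0 -> x = 0)).
Proof.
move=> gB; have g0 : g 0 = 0 by rewrite -(subrr 0) gB subrr.
have Hf : forall y, [set x | (x \in V) && (g x == y)] =
    [set x in [set x | x \in V] | g x == y] by move=> y; apply/setP=> x; rewrite !inE.
have inE' : forall x, (x \in [set x | x \in V]) = (x \in V) by move=> x; rewrite inE.
have cV := card_vs V; have cR := card_rV F m.
split.
- move=> H; have [] := (fiber1 [set x | x \in V] g).1; first by move=> y; rewrite -Hf.
  move=> inj; rewrite cV cR => /(expnI (F_gt1 F)) dV; split=> // x Vx gx.
  by apply: inj; rewrite ?inE' ?rpred0 ?g0.
- move=> [dV ker] y; rewrite Hf; apply: (fiber1 [set x | x \in V] g).2; split.
    move=> x1 x2; rewrite !inE' => V1 V2 E; apply/eqP; rewrite -subr_eq0; apply/eqP.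
    by apply: ker; rewrite ?rpredB // gB E subrr.
  by rewrite cV cR dV.
Qed.
Lemma weight_le (F : fieldType) k m (x : 'rV[F]_k) (c : 'I_m -> 'I_k) :
  injective c -> (forall j, x 0 (c j) = 0) -> (hweight x <= k - m)%N.
Proof.
move=> ic z; rewrite /hweight.
have sub : [set i | x 0 i != 0] \subset ~: (c @: [set: 'I_m]).
  apply/subsetP => i; rewrite !inE; apply: contra => /imsetP [j _ ->].
  by rewrite z.
have := subset_leq_card sub.
have := cardsC (c @: [set: 'I_m]).
rewrite card_imset // cardsT !card_ord. move=> a b; apply: (leq_trans b); move: a; move: (#|~: _|) => w; lia.
Qed.

Lemma weight_zeros (F : fieldType) k m (x : 'rV[F]_k) :
  (hweight x <= k - m)%N -> (m <= k)%N ->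
  exists c : 'I_m -> 'I_k, injective c /\ (forall j, x 0 (c j) = 0).
Proof.
move=> hw mk; set Z := ~: [set i | x 0 i != 0].
have H : (m <= #|Z|)%N.
  have := cardsC [set i | x 0 i != 0]; rewrite card_ord.
  move: hw; rewrite /hweight -/Z; move: (#|Z|) (#|[set i | x 0 i != 0]|) => a b; lia.
exists (fun j => enum_val (widen_ord H j)); split.
  by move=> j1 j2 /enum_val_inj /(congr1 val) /= E; apply: val_inj.
move=> j; have := enum_valP (widen_ord H j); rewrite !inE negbK.
by move/eqP.
Qed.


Lemma dim_le (F:fieldType) k (C : {vspace 'rV[F]_k}) : (\dim C <= k)%N.
Proof. by have := dimvS (subvf C); rewrite dimvf dim_matrix GRing.mul1r. Qed.

Lemma row_proj_sub (F : fieldType) k d (c : 'I_d -> 'I_k) (x1 x2 : 'rV[F]_k) :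
  \row_j (x1 - x2) 0 (c j) = \row_j x1 0 (c j) - \row_j x2 0 (c j).
Proof. by apply/rowP => j; rewrite !mxE. Qed.

Lemma MDS_char (F : finFieldType) k (C : {vspace 'rV[F]_k}) : (0 < \dim C)%N ->
  MDS C <-> (forall c : 'I_(\dim C) -> 'I_k, injective c ->
              forall x, x \in C -> \row_j x 0 (c j) = 0 -> x = 0).
Proof.
move=> d0; have dk := dim_le C.
split.
- move=> [_ Hw] c ic x Cx px; apply/eqP; apply: contraT => nx.
  have := Hw x Cx nx.
  have z : forall j, x 0 (c j) = 0.
    by move=> j; have := congr1 (fun M : 'rV_(\dim C) => M 0 j) px; rewrite !mxE.
  have := weight_le ic z; move: (hweight x) => w; set d := \dim C => a b; exfalso; lia.
- move=> HP.
  have Hge : forall x, x \in C -> x != 0 -> (k - \dim C + 1 <= hweight x)%N.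
    move=> x Cx nx; rewrite leqNgt; apply/negP => lt.
    have hw : (hweight x <= k - \dim C)%N by rewrite addn1 ltnS in lt.
    have [c [ic z]] := weight_zeros hw dk.
    by move/eqP: nx; apply; apply: (HP c ic x Cx); apply/rowP => j; rewrite !mxE z.
  split=> //.
  pose c0 := widen_ord dk.
  have ic0 : injective c0 by move=> a b /(congr1 val) /= E; apply: val_inj.
  pose y : 'rV[F]_(\dim C) := \row_j (if val j == 0%N then 1 else 0).
  have fib := (@lin_fiber F k (\dim C) C (fun x => \row_j x 0 (c0 j))
                 (@row_proj_sub F k _ c0)).2 (conj erefl (HP c0 ic0)) y.
  move/eqP/cards1P: fib => [x Hx].
  have : x \in [set x | (x \in C) && (\row_j x 0 (c0 j) == y)] by rewrite Hx set11.
  rewrite inE => /andP [Cx /eqP px].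
  have pxj : forall j, x 0 (c0 j) = y 0 j.
    by move=> j; rewrite -px mxE.
  have nx : x != 0.
    apply/eqP => x0; have := pxj (Ordinal d0); rewrite x0 !mxE /=.
    by move/eqP; rewrite eq_sym oner_eq0.
  exists x => //; split=> //.
  have lt1 : forall j : 'I_(\dim C).-1, (j.+1 < \dim C)%N.
    by move=> j; have := ltn_ord j; lia.
  have lt2 : forall j : 'I_(\dim C).-1, (j.+1 < k)%N.
    by move=> j; exact: leq_trans (lt1 j) dk.
  have ic' : injective (fun j : 'I_(\dim C).-1 => Ordinal (lt2 j)).
    by move=> a b /(congr1 val) /= [E]; apply: val_inj.
  have z : forall j : 'I_(\dim C).-1, x 0 (Ordinal (lt2 j)) = 0.
    move=> j; have -> : Ordinal (lt2 j) = c0 (Ordinal (lt1 j)) by apply: val_inj.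
    by rewrite pxj mxE.
  have := weight_le ic' z; have := Hge x Cx nx; have := dk; have := d0.
  move: (hweight x) => w; set d := \dim C; lia.
Qed.

Definition gmap (F : fieldType) k m (C C' : {vspace 'rV[F]_k})
  (HD : m = \dim (C :\: C')) (u : 'rV[F]_k) : 'rV[F]_(k + m) :=
  row_mx u (\row_j coord (vbasis (C :\: C')) (cast_ord HD j) (addv_pi1 C C' u)).

Lemma gmap_is_linear (F : fieldType) k m (C C' : {vspace 'rV[F]_k})
  (HD : m = \dim (C :\: C')) : linear (gmap HD).
Proof.
move=> a u v; rewrite /gmap linearP /= scale_row_mx add_row_mx; congr row_mx.
by apply/rowP => j; rewrite !mxE linearP.
Qed.

HB.instance Definition _ (F : fieldType) k m (C C' : {vspace 'rV[F]_k})
  (HD : m = \dim (C :\: C')) :=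
  GRing.isLinear.Build F 'rV[F]_k 'rV[F]_(k + m) _ (gmap HD) (gmap_is_linear HD).

Lemma eq_row_mxE (F : eqType) m n1 n2 (a y : 'M[F]_(m, n1)) (b z : 'M[F]_(m, n2)) :
  (row_mx a b == row_mx y z) = (a == y) && (b == z).
Proof.
by apply/eqP/andP => [/eq_row_mx [-> ->]|[/eqP-> /eqP->]].
Qed.

Lemma MDS_chard (F : finFieldType) k (C : {vspace 'rV[F]_k}) d :
  \dim C = d -> (0 < d)%N ->
  MDS C <-> (forall c : 'I_d -> 'I_k, injective c ->
              forall x, x \in C -> \row_j x 0 (c j) = 0 -> x = 0).
Proof. by move=> <-; exact: MDS_char. Qed.

Lemma pB (F : fieldType) k n m (c : 'I_m -> 'I_k) (x1 x2 : 'rV[F]_(k + n)) :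
  \row_j (x1 - x2) 0 (lshift n (c j)) =
  \row_j x1 0 (lshift n (c j)) - \row_j x2 0 (lshift n (c j)).
Proof. by apply/rowP => j; rewrite !mxE. Qed.

Lemma widen_inj m k (mk : (m <= k)%N) : injective (widen_ord mk).
Proof. by move=> a b /(congr1 val) /= E; apply: val_inj. Qed.

Lemma forward (F : finFieldType) (s t k : nat) :
  (1 <= s)%N -> (s < t)%N -> (t <= k)%N ->
  forall A : {vspace 'rV[F]_(k + (t - s))}, is_linear_AOA s t k A ->
  (exists C C' : {vspace 'rV[F]_k},
     [/\ \dim C = t, MDS C, \dim C' = s, MDS C' & (C' <= C)%VS]).
Proof.
move=> s1 st tk A [H1 H3].
pose L := linfun (@lsubmx F 1 k (t - s)).
pose R := linfun (@rsubmx F 1 k (t - s)).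
have pL : forall m (c : 'I_m -> 'I_k) x,
    \row_j (L x) 0 (c j) = \row_j x 0 (lshift (t - s) (c j)).
  by move=> m c x; apply/rowP => j; rewrite !mxE lfunE /= mxE.
have HA : forall c : 'I_t -> 'I_k, injective c -> \dim A = t /\
    (forall x, x \in A -> \row_j x 0 (lshift (t - s) (c j)) = 0 -> x = 0).
  by move=> c ic; apply/(lin_fiber A (@pB F k (t - s) t c)); exact: H1.
pose V' := (A :&: lker R)%VS.
have HV : forall c : 'I_s -> 'I_k, injective c -> \dim V' = s /\
    (forall x, x \in V' -> \row_j x 0 (lshift (t - s) (c j)) = 0 -> x = 0).
  move=> c ic; apply/(lin_fiber V' (@pB F k (t - s) s c)) => y.
  apply: eq_trans (H3 c ic y 0); apply: eq_card => x.
  rewrite !inE memv_cap memv_ker lfunE /=.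
  by case: (x \in A); case: (_ == y); case: (rsubmx x == 0).
have sk : (s <= k)%N by apply: leq_trans (ltnW st) tk.
have [dA kA] := HA _ (@widen_inj _ _ tk).
have kerL : forall U, (U <= A)%VS -> (U :&: lker L = 0)%VS.
  move=> U UA; apply/eqP; rewrite -subv0; apply/subvP => x.
  rewrite memv_cap memv_ker memv0 lfunE /= => /andP [Ux /eqP lx].
  apply/eqP; apply: (kA); first exact: (subvP UA).
  apply/rowP => j; rewrite !mxE.
  by have := congr1 (fun M : 'rV_k => M 0 (widen_ord tk j)) lx; rewrite !mxE.
exists (L @: A)%VS, (L @: V')%VS.
have dC : \dim (L @: A) = t by rewrite limg_dim_eq ?kerL.
have dC' : \dim (L @: V') = s.
  by rewrite limg_dim_eq ?kerL ?capvSl //; have [] := HV _ (@widen_inj _ _ sk).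
have t0 : (0 < t)%N by apply: leq_ltn_trans st.
split=> //.
- apply/(MDS_chard dC t0) => c ic u /memv_imgP [x Ax ->] pu.
  by rewrite ((HA c ic).2 x Ax) ?linear0 // -pL.
- apply/(MDS_chard dC' s1) => c ic u /memv_imgP [x Ax ->] pu.
  by rewrite ((HV c ic).2 x Ax) ?linear0 // -pL.
- exact: limgS (capvSl _ _).
Qed.

Lemma backward (F : finFieldType) (s t k : nat) :
  (1 <= s)%N -> (s < t)%N -> (t <= k)%N ->
  (exists C C' : {vspace 'rV[F]_k},
     [/\ \dim C = t, MDS C, \dim C' = s, MDS C' & (C' <= C)%VS]) ->
  exists A : {vspace 'rV[F]_(k + (t - s))}, is_linear_AOA s t k A.
Proof.
move=> s1 st tk [C [C' [dC mC dC' mC' sub]]].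
have HD : (t - s)%N = \dim (C :\: C').
  have := dimv_cap_compl C C'; rewrite (capv_idPr sub) dC' dC.
  by move: (\dim (C :\: C')) => w; lia.
pose G := linfun (gmap HD).
have Gl : forall u, lsubmx (G u) = u by move=> u; rewrite lfunE /= /gmap row_mxKl.
have Gr : forall u, rsubmx (G u) =
    \row_j coord (vbasis (C :\: C')) (cast_ord HD j) (addv_pi1 C C' u).
  by move=> u; rewrite lfunE /= /gmap row_mxKr.
have kerG : (C :&: lker G = 0)%VS.
  apply/eqP; rewrite -subv0; apply/subvP => x.
  rewrite memv_cap memv_ker memv0 => /andP [Cx /eqP Gx].
  by rewrite -(Gl x) Gx linear0.
have dA : \dim (G @: C) = t by rewrite limg_dim_eq.
have pG : forall m (c : 'I_m -> 'I_k) u,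
    \row_j (G u) 0 (lshift (t - s) (c j)) = \row_j u 0 (c j).
  by move=> m c u; apply/rowP => j; rewrite !mxE lfunE /= /gmap row_mxEl.
have t0 : (0 < t)%N by apply: leq_ltn_trans st.
have kC := (MDS_chard dC t0).1 mC.
have kC' := (MDS_chard dC' s1).1 mC'.
exists (G @: C)%VS; split.
- move=> c ic y; apply: (lin_fiber _ (@pB F k (t - s) t c)).2; split=> //.
  move=> x /memv_imgP [u Cu ->]; rewrite pG => pu.
  by rewrite (kC c ic u Cu pu) linear0.
- move=> c ic y z.
  pose g2 (x : 'rV[F]_(k + (t - s))) : 'rV[F]_(s + (t - s)) :=
    row_mx (\row_j x 0 (lshift (t - s) (c j))) (rsubmx x).
  have g2B : forall x1 x2, g2 (x1 - x2) = g2 x1 - g2 x2.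
    by move=> x1 x2; rewrite /g2 pB linearB /= opp_row_mx add_row_mx.
  apply: eq_trans (_ : #|[set x | (x \in (G @: C)%VS) && (g2 x == row_mx y z)]| = 1%N).
    by apply: eq_card => x; rewrite !inE /g2 eq_row_mxE.
  apply: (lin_fiber _ g2B).2; split.
    by rewrite dA subnKC // ltnW.
  move=> x /memv_imgP [u Cu ->] e.
  have e1 := congr1 lsubmx e; have e2 := congr1 rsubmx e.
  rewrite /g2 row_mxKl linear0 pG in e1.
  rewrite /g2 row_mxKr linear0 Gr in e2.
  have Dm : addv_pi1 C C' u \in (C :\: C')%VS := memv_pi _ _ u.
  have pi0 : addv_pi1 C C' u = 0.
    rewrite (coord_vbasis Dm) big1 // => i _.
    have := congr1 (fun M : 'rV_(t - s) => M 0 (cast_ord (esym HD) i)) e2.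
    by rewrite !mxE cast_ordKV => ->; rewrite scale0r.
  have uC' : u \in C'.
    have := @addv_pi1_pi2 _ _ C C' u (subvP (addvSl C C') u Cu).
    by rewrite pi0 add0r => <-; apply: memv_pi2.
  by rewrite (kC' c ic u uC' e1) linear0.
Qed.

Unset Implicit Arguments.

Theorem theorem3p3 (F : finFieldType) (s t k : nat) :
  (1 <= s)%N -> (s < t)%N -> (t <= k)%N ->
  (exists A : {vspace 'rV[F]_(k + (t - s))}, is_linear_AOA s t k A) <->
  (exists C C' : {vspace 'rV[F]_k},
     [/\ \dim C = t, MDS C, \dim C' = s, MDS C' & (C' <= C)%VS]).
Proof.
move=> s1 st tk; split.
- by move=> [A HA]; exact: (forward s1 st tk HA).
- exact: backward.
Qed.
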